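(* An ample class $C\subseteq 2^X$ admits a corner peeling if and only if there exists an acyclic orientation of the edges of $G(C)$ that is a unique sink orientation.
   Context: A cube of $2^X$ is $\{T\cup Z:Z\subseteq Y\}$ with $Y\subseteq X$, $T\subseteq X\setminus Y$, support $\mathrm{supp}=Y$; a cube of $C$ is one contained in $C$. $Y$ is shattered by $C$ if $\{c\cap Y:c\in C\}=2^Y$; $C$ is ample if every shattered set is the support of a cube of $C$. A corner of $C$ is a concept lying in exactly one inclusion-maximal cube of $C$. A corner peeling is an ordering $c_1,\dots,c_m$ of $C$ such that each $c_i$ is a corner of $\{c_1,\dots,c_i\}$. $G(C)$ is the graph on $C$ with an $x$-edge $cc'$ whenever $c\Delta c'=\{x\}$. For an orientation $o$ of $G(C)$, the out-map $r_o(c)$ is the set of $x$ such that the $x$-edge at $c$ is directed away from $c$. $o$ is a unique sink orientation if (C1) for every $c$, the cube of $2^X$ with support $r_o(c)$ containing $c$ is contained in $C$, and (C2) every cube of $C$ contains exactly one vertex that is a sink of $o$ restricted to the edges of that cube. *)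

(* Defs.v *)
From mathcomp Require Import all_boot.
Set Implicit Arguments. Unset Strict Implicit. Unset Printing Implicit Defensive.

(* Ground set X is the finite type T; concepts are elements of {set T};
   a concept class C is a {set {set T}}. *)
Section Ample.
Variable T : finType.
Implicit Types (C Q : {set {set T}}) (c d A Y : {set T}) (x : T).

(* The cube of 2^X with support Y and base A (A disjoint from Y):
   { A :|: Z | Z \subset Y }. *)
Definition cube A Y : {set {set T}} := [set A :|: Z | Z in powerset Y].

Definition is_cube Q : Prop :=
  exists A Y, [disjoint A & Y] /\ Q = cube A Y.

Definition cube_of C Q : Prop := is_cube Q /\ Q \subset C.

Definition shatters C Y : bool := [set c :&: Y | c in C] == powerset Y.

Definition ample C : Prop :=
  forall Y, shatters C Y -> exists A, [disjoint A & Y] /\ cube A Y \subset C.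

Definition max_cube C Q : Prop :=
  cube_of C Q /\ forall Q', cube_of C Q' -> Q \subset Q' -> Q' = Q.

Definition corner C c : Prop :=
  c \in C /\ exists Q, max_cube C Q /\ c \in Q /\
                       forall Q', max_cube C Q' -> c \in Q' -> Q' = Q.

Definition corner_peeling C (s : seq {set T}) : Prop :=
  uniq s /\ [set c in s] = C /\
  forall i, i < size s -> corner [set c in take i.+1 s] (nth set0 s i).

Definition has_corner_peeling C : Prop := exists s, corner_peeling C s.

Definition flip c x : {set T} := if x \in c then c :\ x else x |: c.

Definition adjacent c d : bool := #|(c :\: d) :|: (d :\: c)| == 1.

(* An orientation o of G(C) is given by a relation; o c d means that the
   edge cd is directed from c to d.  Every edge of G(C) receives exactly
   one direction. *)
Definition orientation C (o : rel {set T}) : Prop :=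
  forall c d, c \in C -> d \in C -> adjacent c d -> o c d != o d c.

Definition arc C (o : rel {set T}) : rel {set T} :=
  fun c d => [&& c \in C, d \in C, adjacent c d & o c d].

Definition acyclic C (o : rel {set T}) : Prop :=
  forall c d, arc C o c d -> ~~ connect (arc C o) d c.

Definition outmap C (o : rel {set T}) c : {set T} :=
  [set x | (flip c x \in C) && o c (flip c x)].

Definition sink_in (o : rel {set T}) Q v : bool :=
  (v \in Q) && [forall u in Q, adjacent v u ==> ~~ o v u].

Definition USO C (o : rel {set T}) : Prop :=
  (forall c, c \in C -> cube (c :\: outmap C o c) (outmap C o c) \subset C) /\
  (forall Q, cube_of C Q -> #|[set v | sink_in o Q v]| = 1).

End Ample.

(* Main.v *)
Require Import Defs.
From mathcomp Require Import all_boot.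
From Stdlib Require Import Classical.
Set Implicit Arguments. Unset Strict Implicit. Unset Printing Implicit Defensive.


Section Basic.
Variable T : finType.
Implicit Types (C D G Q : {set {set T}}) (c d A Y : {set T}) (x y : T).

Lemma in_flip c x z : (z \in flip c x) = (if z == x then x \notin c else z \in c).
Proof.
rewrite /flip; case: (x \in c) /boolP => hx; case: (eqVneq z x) => [->|nz];
  rewrite ?in_setD1 ?in_setU1 ?eqxx ?hx ?(negPf nz) //.
Qed.

Lemma in_flipx c x z : (z \in flip c x) = (z == x) (+) (z \in c).
Proof. by rewrite in_flip; case: eqVneq => [->|]; case: (x \in c). Qed.

Lemma flipK c x : flip (flip c x) x = c.
Proof. by apply/setP => z; rewrite !in_flipx addbA addbb. Qed.

Lemma flip_neq c x : flip c x != c.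
Proof. apply/eqP => /setP /(_ x); rewrite in_flipx eqxx; by case: (x \in c). Qed.

Lemma flipC c x y : flip (flip c x) y = flip (flip c y) x.
Proof. by apply/setP => z; rewrite !in_flipx addbCA. Qed.

Lemma flip_inj c x y : flip c x = flip c y -> x = y.
Proof.
move=> /setP /(_ x); rewrite !in_flipx eqxx.
case: eqVneq => // nxy; by case: (x \in c).
Qed.

Lemma adjacent_flip c x : adjacent c (flip c x).
Proof.
rewrite /adjacent; apply/cards1P; exists x; apply/setP => z.
rewrite in_set1 in_setU !in_setD !in_flipx.
by case: eqVneq; case: (z \in c).
Qed.

Lemma adjacentP c d : adjacent c d -> exists x, d = flip c x.
Proof.
rewrite /adjacent => /cards1P [x hx]; exists x; apply/setP => z.
move/setP: hx => /(_ z); rewrite in_set1 in_setU !in_setD in_flipx.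
case: eqVneq; case: (z \in c); case: (z \in d) => //.
Qed.

Lemma adjacent_sym c d : adjacent c d = adjacent d c.
Proof. by rewrite /adjacent setUC. Qed.

Lemma adjacent_neq c d : adjacent c d -> c != d.
Proof. by move=> /adjacentP [x ->]; rewrite eq_sym flip_neq. Qed.

Lemma mem_cube A Y d : [disjoint A & Y] -> (d \in cube A Y) = (d :\: Y == A).
Proof.
move=> dis; apply/imsetP/eqP => [[Z]|e].
- rewrite inE => sZ ->; apply/setP => z; rewrite !inE.
  case: (boolP (z \in Y)) => zY /=.
  + by apply/esym/negP => zA; move/disjointFr: dis => /(_ z zA); rewrite zY.
  + by case: (boolP (z \in Z)) => zZ; rewrite ?orbF ?orbT //; rewrite (subsetP sZ _ zZ) in zY.
- exists (d :&: Y); first by rewrite inE subsetIr.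
  apply/setP => z; rewrite -e !inE; by case: (z \in Y); case: (z \in d).
Qed.

Lemma cube_mem_flip A Y c x : [disjoint A & Y] -> c \in cube A Y ->
  (flip c x \in cube A Y) = (x \in Y).
Proof.
move=> dis; rewrite !mem_cube // => /eqP <-; apply/eqP/idP => [|xY].
- move=> /setP /(_ x); rewrite !inE in_flip eqxx; case: (x \in Y) => //=.
  by case: (x \in c).
- apply/setP => z; rewrite !inE in_flip; case: eqVneq => [->|]; by rewrite ?xY.
Qed.

Lemma cube_sub A Y c (R : {set T}) : [disjoint A & Y] -> c \in cube A Y -> Y \subset R ->
  cube A Y \subset cube (c :\: R) R.
Proof.
move=> dis cQ YR; apply/subsetP => d; rewrite !mem_cube //; last first.
  by rewrite disjoint_subset; apply/subsetP => z; rewrite !inE => /andP[].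
move: cQ; rewrite mem_cube // => /eqP e1 /eqP e2.
apply/eqP/setP => z; rewrite !inE; case: (boolP (z \in R)) => //= zR.
have zY : z \notin Y by apply/negP => /(subsetP YR); rewrite (negPf zR).
by move/setP: e1 => /(_ z); move/setP: e2 => /(_ z); rewrite !inE zY /= => -> ->.
Qed.

Lemma cube_base A Y : [disjoint A & Y] -> A \in cube A Y.
Proof.
move=> dis; rewrite mem_cube //; apply/eqP/setP => z; rewrite !inE.
case: (boolP (z \in A)) => zA; rewrite ?andbF ?andbT //.
by move/disjointFr: dis => /(_ z zA) ->.
Qed.

End Basic.


Section B.
Variable T : finType.
Implicit Types (C D G Q : {set {set T}}) (c d A Y : {set T}) (x y : T).

Lemma max_exists D Q : cube_of D Q -> exists M, max_cube D M /\ Q \subset M.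
Proof.
suff H : forall k Q, #|~: Q| < k -> cube_of D Q -> exists M, max_cube D M /\ Q \subset M.
  by apply: (H #|~: Q|.+1).
elim=> [|k IH] {}Q hk hQ; first by [].

case: (classic (forall Q', cube_of D Q' -> Q \subset Q' -> Q' = Q)) => [H|H].
  by exists Q; split.
have [Q' hQ'] := not_all_ex_not _ _ H.
have [cQ' hQ''] := imply_to_and _ _ hQ'.
have [sQ nQ] := imply_to_and _ _ hQ''.
have pQ : Q \proper Q'.
  by rewrite properEneq sQ andbT; apply/eqP => e; apply: nQ.
have [M [hM sM]] := IH Q' (leq_trans (proper_card (etrans (properC _ _) pQ)) hk) cQ'.
exists M; split => //; exact: subset_trans sQ sM.
Qed.

Lemma edge_disj c x : [disjoint c :\ x & [set x]].
Proof. by rewrite disjoint_subset; apply/subsetP => z; rewrite !inE => /andP[]. Qed.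

Lemma edge_mem c x d : d \in cube (c :\ x) [set x] -> d = c \/ d = flip c x.
Proof.
rewrite mem_cube ?edge_disj // => /eqP /setP e.
case: (eqVneq (x \in d) (x \in c)) => h; [left|right]; apply/setP => z;
  move: (e z); rewrite !inE ?in_flipx; case: eqVneq => [->|] //= _;
  move: h; case: (x \in c); case: (x \in d) => //.
Qed.

Lemma edge_c c x : c \in cube (c :\ x) [set x].
Proof. by rewrite mem_cube ?edge_disj //. Qed.

Lemma edge_f c x : flip c x \in cube (c :\ x) [set x].
Proof. by rewrite cube_mem_flip ?edge_disj ?edge_c ?inE. Qed.

Lemma edge_cube D c x : c \in D -> flip c x \in D -> cube_of D (cube (c :\ x) [set x]).
Proof.
move=> cD fD; split; first by exists (c :\ x), [set x]; split => //; exact: edge_disj.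
by apply/subsetP => d /edge_mem [->|->].
Qed.

Lemma corner_cube D c : corner D c -> exists A Y, [/\ [disjoint A & Y],
  cube A Y \subset D, c \in cube A Y & forall x, flip c x \in D -> x \in Y].
Proof.
move=> [cD [Q [[[[A [Y [dis eQ]]] sQ] mQ] [cQ uQ]]]].
exists A, Y; split => //; rewrite -?eQ //.
move=> x fD.
have [M [hM sM]] := max_exists (edge_cube cD fD).
have eM : M = Q by apply: uQ => //; exact: (subsetP sM _ (edge_c c x)).
have : flip c x \in Q by rewrite -eM; exact: (subsetP sM _ (edge_f c x)).
by rewrite eQ cube_mem_flip // -eQ.
Qed.

End B.


Section Cflip.
Variable T : finType.
Implicit Types (C D G Q : {set {set T}}) (c d v u A Y : {set T}) (x y : T) (p : rel {set T}).

Definition sinks p Q := [set v | sink_in p Q v].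
Definition Psink C p := forall Q, cube_of C Q -> #|sinks p Q| = 1.
Definition flipo x p : rel {set T} :=
  fun c d => if d == flip c x then p d c else p c d.
Definition facet Q x (b : bool) := [set d in Q | (x \in d) == b].

Lemma flipo_orient C p x : orientation C p -> orientation C (flipo x p).
Proof.
move=> hp c d cC dC adj; rewrite /flipo.
case: (eqVneq d (flip c x)) => [e|ne].
  by subst d; rewrite flipK !eqxx eq_sym; apply: hp.
case: (eqVneq c (flip d x)) => [e|_]; last exact: hp.
by move: ne; rewrite e flipK eqxx.
Qed.

Lemma sink_in_eq p q G v :
  (forall u, v \in G -> u \in G -> adjacent v u -> p v u = q v u) ->
  sink_in p G v = sink_in q G v.
Proof.
move=> h; rewrite /sink_in; case: (boolP (v \in G)) => //= vG.
apply: eq_forallb_in => u uG; case: (boolP (adjacent v u)) => //= a.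
by rewrite h.
Qed.

Lemma disj_facet A Y x (b : bool) : [disjoint A & Y] -> x \in Y ->
  [disjoint (if b then x |: A else A) & Y :\ x].
Proof.
move=> dis xY; rewrite disjoint_subset; apply/subsetP => z.
have H : z \in A -> z \notin Y by move=> zA; apply/negP => zY; have := disjointFr dis zA; rewrite zY.
rewrite !inE; case: b; rewrite ?inE; case: eqVneq => [->|nz] //=.
Qed.

Lemma facet_cube A Y x b : [disjoint A & Y] -> x \in Y ->
  facet (cube A Y) x b = cube (if b then x |: A else A) (Y :\ x).
Proof.
move=> dis xY.
have xA : x \notin A.
  by apply/negP => xA; have := disjointFr dis xA; rewrite xY.
have dis' := disj_facet b dis xY.
apply/setP => d; rewrite inE !mem_cube //; apply/andP/eqP => [[/eqP e hb]|e].
  apply/setP => z; rewrite -e; case: b hb {dis'} => /eqP hb; rewrite !inE;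
  case: (eqVneq z x) => [->|nz] /=; rewrite ?xY ?hb ?andbT //;
  by case: (z \in d); case: (z \in Y).
case: b e {dis'} => e; split.
- apply/eqP/setP => z; move/setP: e => /(_ z); rewrite !inE.
  case: (eqVneq z x) => [->|nz] /=; first by rewrite xY (negPf xA).
  by rewrite andbC.
- by move/setP: e => /(_ x); rewrite !inE eqxx /= => ->.
- apply/eqP/setP => z; move/setP: e => /(_ z); rewrite !inE.
  case: (eqVneq z x) => [->|nz] /=; first by rewrite xY (negPf xA).
  by rewrite andbC.
- by move/setP: e => /(_ x); rewrite !inE eqxx /= (negPf xA) => ->.
Qed.

Lemma sink_split p A Y x v : [disjoint A & Y] -> x \in Y -> v \in cube A Y ->
  sink_in p (cube A Y) v =
  sink_in p (facet (cube A Y) x (x \in v)) v && ~~ p v (flip v x).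
Proof.
move=> dis xY vG; rewrite /sink_in vG inE vG eqxx /=.
apply/forallP/andP => [H|[/forallP H1 H2] u].
  split; last first.
    by move: (H (flip v x)); rewrite cube_mem_flip // xY adjacent_flip.
  by apply/forallP => u; apply/implyP; rewrite inE => /andP [uG _]; move: (H u); rewrite uG.
apply/implyP => uG; apply/implyP => /[dup] a /adjacentP [y ey].
case: (eqVneq y x) => [exy|nyx]; first by rewrite ey exy.
have hxy : (x == y) = false by rewrite eq_sym (negPf nyx).
have uF : u \in facet (cube A Y) x (x \in v) by rewrite inE uG ey in_flipx hxy eqxx.
by move: (H1 u) => /implyP /(_ uF) /implyP /(_ a).
Qed.

Lemma flip_one C p x : orientation C p -> Psink C p -> Psink C (flipo x p).
Proof.
move=> hp hP G [[A [Y [dis eG]]] sG]; subst G.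
case: (boolP (x \in Y)) => xY; last first.
  have -> : sinks (flipo x p) (cube A Y) = sinks p (cube A Y).
    2: by apply: hP; split => //; exists A, Y.
  apply/setP => v; rewrite !inE; apply: sink_in_eq => u vG uG _.
  rewrite /flipo; case: eqVneq => // e.
  by move: uG; rewrite e cube_mem_flip // (negPf xY).
set F := facet (cube A Y) x.
have Fc b : cube_of C (F b).
  split; first by exists (if b then x |: A else A), (Y :\ x); rewrite /F facet_cube //; split => //;
    rewrite disjoint_subset; apply/subsetP => z; rewrite !inE;
    case: b; rewrite ?inE; case: eqVneq => [->|nz] //= zA; apply/negP => /andP [_ zY]
      || apply/negP => zY; have := disjointFr dis zA; rewrite zY.
  by apply: subset_trans sG; apply/subsetP => d; rewrite inE => /andP[].
set P := [set v in cube A Y | sink_in p (F (x \in v)) v].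
set N := [set v | ~~ p v (flip v x)].
have e1 : sinks p (cube A Y) = P :&: N.
  apply/setP => v; rewrite !inE; case: (boolP (v \in cube A Y)) => vG /=.
    by rewrite (sink_split p dis xY vG).
  by rewrite /sink_in (negPf vG).
have e2 : sinks (flipo x p) (cube A Y) = P :\: N.
  apply/setP => v; rewrite !inE; case: (boolP (v \in cube A Y)) => vG /=; last first.
    by rewrite /sink_in (negPf vG) andbF.
  rewrite (sink_split _ dis xY vG) negbK andbC; congr andb.
    rewrite /flipo eqxx.
    have fG : flip v x \in cube A Y by rewrite cube_mem_flip.
    move: (hp v (flip v x) (subsetP sG _ vG) (subsetP sG _ fG) (adjacent_flip v x)).
    by case: (p v (flip v x)); case: (p (flip v x) v).
  apply: sink_in_eq => u _; rewrite inE => /andP [_ /eqP hu] _.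
  rewrite /flipo; case: eqVneq => // e; move: hu; rewrite e in_flipx eqxx.
  by case: (x \in v).
have eF b : sinks p (F b) = P :&: [set v : {set T} | (x \in v) == b].
  apply/setP => v; rewrite !inE; case: (eqVneq (x \in v) b) => [<-|ne] /=; last first.
    by rewrite andbF /sink_in /F /facet inE (negPf ne) andbF.
  rewrite andbT; case: (boolP (v \in cube A Y)) => vG //=.
  by rewrite /sink_in /F /facet inE (negPf vG).
have cP : #|P| = 2.
  rewrite -(cardsID [set v : {set T} | (x \in v) == true] P).
  have -> : P :\: [set v : {set T} | (x \in v) == true] = P :&: [set v : {set T} | (x \in v) == false].
    by apply/setP => v; rewrite !inE; case: (x \in v); rewrite ?andbT ?andbF. 
  by rewrite -!eF !hP.
have h1 := hP (cube A Y) (conj (ex_intro _ A (ex_intro _ Y (conj dis erefl))) sG).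
move: (cardsID N P); rewrite cP -e1 -e2 h1.
by case.
Qed.

Definition flipall (l : seq T) p := foldr flipo p l.

Lemma flipall_val l p c y : uniq l ->
  flipall l p c (flip c y) = if y \in l then p (flip c y) c else p c (flip c y).
Proof.
elim: l c y => [//|x l IH] c y /= /andP [xl ul].
rewrite /flipo; case: (eqVneq (flip c y) (flip c x)) => [/flip_inj ->|ne].
  have := IH (flip c x) x ul; rewrite flipK (negPf xl) => ->.
  by rewrite inE eqxx.
rewrite IH // inE; case: (eqVneq y x) => [e|_] //.
by move: ne; rewrite e eqxx.
Qed.

Lemma flipall_P C l p : orientation C p -> Psink C p ->
  orientation C (flipall l p) /\ Psink C (flipall l p).
Proof.
move=> h1 h2; elim: l => [|x l [IH1 IH2]] //=.
split; [exact: flipo_orient | exact: flip_one].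
Qed.

Lemma uniq_source C p G u v : orientation C p -> Psink C p -> cube_of C G ->
  u \in G -> v \in G ->
  (forall z, z \in G -> adjacent u z -> p u z) ->
  (forall z, z \in G -> adjacent v z -> p v z) -> u = v.
Proof.
move=> ho hP hG uG vG hu hv.
have [_ hq] := flipall_P (enum T) ho hP.
have /eqP/cards1P [s es] := hq G hG.
have key w : w \in G -> (forall z, z \in G -> adjacent w z -> p w z) -> w \in sinks (flipall (enum T) p) G.
  move=> wG hw; rewrite inE /sink_in wG; apply/forallP => z; apply/implyP => zG.
  apply/implyP => /[dup] a /adjacentP [y ey]; subst z.
  rewrite flipall_val ?enum_uniq // mem_enum.
  have := ho w (flip w y) (subsetP (proj2 hG) _ wG) (subsetP (proj2 hG) _ zG) a.
  by rewrite hw //; case: (p (flip w y) w).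
move: (key u uG hu) (key v vG hv); rewrite es !inE => /eqP -> /eqP ->.
by [].
Qed.

End Cflip.


Section D.
Variable T : finType.
Implicit Types (C D G Q : {set {set T}}) (c d v u w A Y : {set T}) (x y : T) (o : rel {set T}).

Lemma topo C o : acyclic C o -> exists s : seq {set T}, [/\ uniq s, ([set c in s] = C) &
  forall c d, c \in s -> d \in s -> Defs.arc C o c d -> index d s < index c s].
Proof.
move=> hac.
suff H : forall n D, #|D| = n -> exists s : seq {set T}, [/\ uniq s, ([set c in s] = D) &
  forall c d, c \in s -> d \in s -> Defs.arc C o c d -> index d s < index c s].
  exact: (H _ C erefl).
elim=> [|n IH] D hD.
  exists [::]; split => //; rewrite (cards0_eq hD); apply/setP => z; by rewrite !inE.
have [c0 c0D] : exists c0, c0 \in D by apply/set0Pn; apply/eqP => e; rewrite e cards0 in hD.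
pose reach e := #|[set f | connect (Defs.arc C o) e f]|.
case: (@arg_maxnP _ c0 (mem D) reach c0D) => c cD0 cmax.
have cD : c \in D := cD0.
have noin d : d \in D -> ~~ Defs.arc C o d c.
  move=> dD; apply/negP => a.
  have : reach c < reach d.
    apply: proper_card; apply/properP; split.
      apply/subsetP => f; rewrite !inE => cf.
      exact: connect_trans (connect1 a) cf.
    exists d; rewrite !inE ?connect0 //; exact: hac a.
  by move=> lt; have := cmax d dD; rewrite /= leqNgt lt.
have [s' [us' es' hs']] : exists s' : seq {set T}, [/\ uniq s', ([set c in s'] = D :\ c) &
  forall c d, c \in s' -> d \in s' -> Defs.arc C o c d -> index d s' < index c s'].
  by apply: IH; move: hD; rewrite (cardsD1 c) cD add1n => -[].
have ins' e : (e \in s') = (e \in D :\ c) by rewrite -es' inE.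
have cs' : c \notin s' by rewrite ins' !inE eqxx.
exists (rcons s' c); split.
- by rewrite rcons_uniq cs' us'.
- apply/setP => e; rewrite !inE mem_rcons in_cons ins' !inE.
  by case: eqVneq => [->|]; rewrite ?cD.
- move=> c1 c2; rewrite !mem_rcons !in_cons -cats1 !index_cat.
  case: (eqVneq c2 c) => [->|n2] /=.
    by move=> h1 _ /(negP (noin c1 _)) []; move: h1; case: eqVneq => [->|_ /=] //; rewrite ins' inE => /andP[].
  move=> h1 h2 a; rewrite h2.
  case: (eqVneq c1 c) => [e1|n1].
    by rewrite e1 (negPf cs') /= addn0 index_mem.
  by move: h1; rewrite (negPf n1) /= => h1; rewrite h1; apply: hs'.
Qed.

Lemma memCi (s : seq {set T}) i e :
  (e \in [set c in take i.+1 s]) = (e \in s) && (index e s <= i).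
Proof.
rewrite inE; case: (boolP (e \in s)) => es /=; first by rewrite in_take.
by apply/negP => /mem_take; rewrite (negPf es).
Qed.

Lemma back C o : orientation C o -> acyclic C o -> USO C o -> has_corner_peeling C.
Proof.
move=> hor hac [hC1 hC2].
have hP : Psink C o by [].
have [s [us es hs]] := topo hac.
have inC e : (e \in C) = (e \in s) by rewrite -es inE.
exists s; split => //; split => // i hi.
set c := nth set0 s i.
have cs : c \in s by exact: mem_nth.
have ic : index c s = i by exact: index_uniq.
have cC : c \in C by rewrite inC.
set R := outmap C o c.
set Q := cube (c :\: R) R.
have dis : [disjoint c :\: R & R].
  by rewrite disjoint_subset; apply/subsetP => z; rewrite !inE => /andP[].
have QC : Q \subset C := hC1 c cC.
have cQ : c \in Q by rewrite mem_cube.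
have cubeQ : cube_of C Q by split => //; exists (c :\: R), R.
have Qi : forall w, w \in Q -> index w s <= i.
  case: (@arg_maxnP _ c (mem Q) (fun w => index w s) cQ) => ws ws0 wmax.
  have wsQ : ws \in Q := ws0.
  suff e : ws = c by move=> w wQ; rewrite -ic -e; exact: wmax.
  apply: (uniq_source hor hP cubeQ wsQ cQ).
    move=> z zQ a.
    have := hor ws z (subsetP QC _ wsQ) (subsetP QC _ zQ) a.
    case: (boolP (o z ws)) => ozw; last by case: (o ws z).
    have : index ws s < index z s.
      apply: hs; rewrite -?inC; try exact: (subsetP QC).
      by rewrite /Defs.arc (subsetP QC _ zQ) (subsetP QC _ wsQ) adjacent_sym a ozw.
    by move=> lt; have := wmax z zQ; rewrite /= leqNgt lt.
  move=> z zQ /adjacentP [y ey]; subst z.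
  by move: zQ; rewrite cube_mem_flip // inE => /andP[].
have Ci e : (e \in [set c0 in take i.+1 s]) = (e \in C) && (index e s <= i).
  by rewrite memCi inC.
have QCi : Q \subset [set c0 in take i.+1 s].
  by apply/subsetP => w wQ; rewrite Ci (subsetP QC _ wQ) Qi.
have cubeQi : cube_of [set c0 in take i.+1 s] Q by split => //; exists (c :\: R), R.
have sub Q' : cube_of [set c0 in take i.+1 s] Q' -> c \in Q' -> Q' \subset Q.
  move=> [[A [Y [dA eQ']]] sQ'] cQ'; subst Q'.
  apply: cube_sub => //; apply/subsetP => y yY.
  have fQ : flip c y \in cube A Y by rewrite cube_mem_flip.
  move: (subsetP sQ' _ fQ); rewrite Ci => /andP [fC fi].
  have fs : flip c y \in s by rewrite -inC.
  have lt : index (flip c y) s < i.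
    rewrite ltn_neqAle fi andbT -ic; apply/negP => /eqP /(index_inj set0 fs cs) e.
    by move: (flip_neq c y); rewrite e eqxx.
  rewrite inE fC /=.
  have := hor c (flip c y) cC fC (adjacent_flip c y).
  case: (boolP (o (flip c y) c)) => ofc; last by case: (o c (flip c y)).
  have : index c s < index (flip c y) s.
    by apply: hs => //; rewrite /Defs.arc fC cC adjacent_sym adjacent_flip ofc.
  by rewrite ic ltnNge ltnW.
rewrite /corner; split; first by rewrite Ci; apply/andP; split; [exact: cC | rewrite ic].
exists Q; split; last split => //.
  split => // Q' hQ' sQQ'; apply/eqP; rewrite eqEsubset sQQ' andbT.
  exact: sub hQ' (subsetP sQQ' _ cQ).
move=> Q' [hQ' mQ'] cQ'; symmetry; apply: mQ' => //; exact: sub.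
Qed.

End D.


Section E.
Variable T : finType.
Implicit Types (C D G Q S : {set {set T}}) (c d v u w a b A Y : {set T}) (x y : T) (o : rel {set T}).

Definition conn D := forall S, S \subset D ->
  (forall a b, a \in S -> b \in D -> adjacent a b -> b \in S) ->
  (exists a, a \in S) -> D \subset S.

Definition sd a b : {set T} := (a :\: b) :|: (b :\: a).

Lemma cube_conn A Y : [disjoint A & Y] -> conn (cube A Y).
Proof.
move=> dis S sS cl [a0 a0S].
have a0Q := subsetP sS _ a0S.
suff H : forall n d, d \in cube A Y -> #|sd d a0| = n -> d \in S.
  by apply/subsetP => d dQ; exact: H _ d dQ erefl.
elim=> [|n IH] d dQ hn.
  suff -> : d = a0 by [].
  apply/setP => z; move/cards0_eq/setP: hn => /(_ z); rewrite !inE.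
  by case: (z \in d); case: (z \in a0).
have [x xsd] : exists x, x \in sd d a0.
  by apply/set0Pn; apply/eqP => e; rewrite e cards0 in hn.
have xY : x \in Y.
  move: dQ a0Q; rewrite !mem_cube // => /eqP e1 /eqP e2.
  apply/negPn/negP => nxY; move: xsd; rewrite !inE.
  move/setP: e1 => /(_ x); move/setP: e2 => /(_ x); rewrite !inE (negPf nxY) /= => -> ->.
  by case: (x \in A).
have fQ : flip d x \in cube A Y by rewrite cube_mem_flip.
have fS : flip d x \in S.
  apply: (IH _ fQ).
  have -> : sd (flip d x) a0 = sd d a0 :\ x.
    apply/setP => z; rewrite !inE !in_flipx.
    case: (eqVneq z x) => [->|_] /=; last by case: (z \in d); case: (z \in a0).
    by move: xsd; rewrite !inE; case: (x \in d); case: (x \in a0).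
  by move: hn; rewrite (cardsD1 x) xsd add1n => -[].
by have := cl _ d fS dQ; rewrite -{2}(flipK d x) adjacent_flip; apply.
Qed.

Lemma conn_remove D c : conn D ->
  (c \in D -> forall a b, a \in D -> b \in D -> adjacent c a -> adjacent c b -> a != b ->
     exists w, [/\ w \in D, w != c, adjacent a w & adjacent b w]) ->
  conn (D :\ c).
Proof.
move=> hD hN S sS cl [a0 a0S].
have sSD : S \subset D by apply: subset_trans sS (subsetDl _ _).
case: (boolP (c \in D)) => cD; last first.
  have eD : D :\ c = D by apply/setP => z; rewrite !inE; case: eqVneq => // ->; rewrite (negPf cD).
  rewrite eD; apply: hD; [by rewrite -eD | move=> a b aS bD ab; apply: (cl a) => //; by rewrite eD | by exists a0].
case: (classic (exists a, a \in S /\ adjacent c a)) => [[a [aS ca]]|no].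
  have sub : D \subset c |: S.
    apply: hD; first by rewrite subUset sub1set cD.
      2: by exists c; rewrite !inE eqxx.
    move=> a' b; rewrite !inE => ha' bD ab.
    case: (eqVneq b c) => [-> //|nbc] /=.
    have bDc : b \in D :\ c by rewrite !inE nbc.
    case/orP: ha' => [/eqP ea'|a'S]; last exact: cl ab.
    subst a'.
    case: (eqVneq a b) => [<- //|nab].
    have [w [wD nwc aw bw]] := hN cD a b (subsetP sSD _ aS) bD ca ab nab.
    have wS : w \in S by apply: (cl a) => //; rewrite !inE nwc.
    by apply: (cl w) => //; rewrite adjacent_sym.
  apply/subsetP => z; rewrite !inE => /andP [nzc zD].
  by move: (subsetP sub _ zD); rewrite !inE (negPf nzc).
have sub : D \subset S.
  apply: hD => //; last by exists a0.
  move=> a b aS bD ab; case: (eqVneq b c) => [ebc|nbc].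
    by exfalso; apply: no; exists a; split => //; rewrite -ebc adjacent_sym.
  by apply: cl ab => //; rewrite !inE nbc.
by apply: subset_trans sub; apply: subsetDl.
Qed.

Lemma forward C (s : seq {set T}) : corner_peeling C s ->
  exists o, orientation C o /\ acyclic C o /\ USO C o.
Proof.
move=> [us [es hs]].
have inC e : (e \in C) = (e \in s) by rewrite -es inE.
pose o : rel {set T} := fun c d => index d s < index c s.
have Ci i e : (e \in [set c0 in take i.+1 s]) = (e \in C) && (index e s <= i).
  by rewrite memCi inC.
have cor c : c \in C -> corner [set c0 in take (index c s).+1 s] c.
  move=> cC; have cs : c \in s by rewrite -inC.
  by have := hs (index c s); rewrite index_mem nth_index //; apply.
exists o; split; [|split; [|split]].
- move=> c d cC dC a; rewrite /o.
  have cs : c \in s by rewrite -inC.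
  have ds : d \in s by rewrite -inC.
  have ne : index c s != index d s.
    apply/negP => /eqP /(index_inj set0 cs ds) e.
    by move: (adjacent_neq a); rewrite e eqxx.
  by case: ltngtP ne.
- move=> c d a; apply/negP => /connectP [p pa ec].
  have lt : index d s < index c s by case/and4P: a.
  suff : index (last d p) s <= index d s by rewrite -ec leqNgt lt.
  clear ec lt a; elim: p d pa => [//|e p IH] d /= /andP [ade pe].
  apply: leq_trans (IH e pe) _; apply: ltnW; by case/and4P: ade.
- move=> c cC.
  have [A [Y [dis sQ cQ hY]]] := corner_cube (cor c cC).
  set R := outmap C o c.
  have RY : R \subset Y.
    apply/subsetP => x; rewrite inE => /andP [fC lt]; apply: hY.
    by rewrite Ci fC /= ltnW.
  have disR : [disjoint c :\: R & R].
    by rewrite disjoint_subset; apply/subsetP => z; rewrite !inE => /andP[].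
  have eA : c :\: Y = A by move: cQ; rewrite mem_cube // => /eqP.
  have disY : [disjoint c :\: Y & Y] by rewrite eA.
  have cR : c \in cube (c :\: R) R by rewrite mem_cube.
  have := cube_sub disR cR RY; rewrite eA => sub.
  apply: subset_trans sub _; apply: subset_trans sQ _.
  by apply/subsetP => e; rewrite Ci => /andP[].
- move=> Q [[A [Y [dis eQ]]] sQ]; subst Q.
  have Qs e : e \in cube A Y -> e \in s by move=> eQ; rewrite -inC (subsetP sQ).
  have AQ := cube_base dis.
  case: (@arg_minnP _ A (mem (cube A Y)) (fun e => index e s) AQ) => m mQ0 mmin.
  have mQ : m \in cube A Y := mQ0.
  apply/eqP/cards1P; exists m; apply/setP => v; rewrite !inE.
  apply/idP/eqP => [hv|->]; last first.
    rewrite /sink_in mQ; apply/forallP => u; apply/implyP => uQ; apply/implyP => _.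
    by rewrite /o -leqNgt; exact: mmin.
  move: hv; rewrite /sink_in => /andP [vQ /forallP hv].
  pose E j := [set e in cube A Y | index e s < j].
  have Esz : E (size s) = cube A Y.
    by apply/setP => e; rewrite !inE andb_idr // => /Qs; rewrite index_mem.
  have Estep j : j < size s -> E j = E j.+1 :\ nth set0 s j.
    move=> js; apply/setP => e; rewrite !inE ltnS.
    case: (boolP (e \in cube A Y)) => eQ; rewrite ?andbF //=.
    rewrite ltn_neqAle; case: (eqVneq (index e s) j) => [ej|nej] /=.
      by rewrite -ej nth_index ?Qs // eqxx.
    case: eqVneq => // en; move: nej; rewrite en index_uniq //.
    by rewrite eqxx.
  have connE : forall k j, size s - j = k -> j <= size s -> conn (E j).
    elim=> [|k IH] j hk hj.
      have -> : j = size s by apply/eqP; rewrite eqn_leq hj -subn_eq0 hk.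
      by rewrite Esz; apply: cube_conn.
    have js : j < size s.
      rewrite ltn_neqAle hj andbT; apply/eqP => e; move: hk; rewrite e subnn.
      by [].
    have IHc := IH j.+1 ltac:(by rewrite subnS hk) js.
    rewrite (Estep j js); apply: conn_remove IHc _ => cE a b aE bE ca cb nab.
    have [x ex] := adjacentP ca; have [y ey] := adjacentP cb.
    have nxy : x != y by apply: contraNneq nab => e; rewrite ex ey e.
    move: cE aE bE; rewrite !inE ltnS => /andP [cQ _] /andP [aQ aj] /andP [bQ bj].
    have [A' [Y' [dis' sQ' cQ' hY']]] := corner_cube (hs j js).
    have xY' : x \in Y'.
      by apply: hY'; rewrite -ex Ci (subsetP sQ _ aQ) /=.
    have yY' : y \in Y'.
      by apply: hY'; rewrite -ey Ci (subsetP sQ _ bQ) /=.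
    have xY : x \in Y by rewrite -(cube_mem_flip x dis cQ) -ex.
    have yY : y \in Y by rewrite -(cube_mem_flip y dis cQ) -ey.
    have aQ' : a \in cube A' Y' by rewrite ex cube_mem_flip.
    have wQ' : flip a y \in cube A' Y' by rewrite cube_mem_flip.
    have wQ : flip a y \in cube A Y by rewrite cube_mem_flip.
    exists (flip a y); split.
    - rewrite inE wQ ltnS /=; have := subsetP sQ' _ wQ'; rewrite Ci => /andP [_ ->].
      by [].
    - apply/eqP => e; have : a = flip (nth set0 s j) y by rewrite -e flipK.
      by rewrite ex => /flip_inj exy; rewrite exy eqxx in nxy.
    - exact: adjacent_flip.
    - by rewrite ex ey flipC adjacent_flip.
  have vs : v \in s := Qs v vQ.
  have hE := connE _ (index v s).+1 erefl ltac:(by rewrite index_mem).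
  have mE : m \in E (index v s).+1 by rewrite inE mQ ltnS mmin.
  have : E (index v s).+1 \subset [set v].
    apply: hE; first by rewrite sub1set inE vQ ltnSn.
    2: by exists v; rewrite inE.
  - move=> a b; rewrite inE => /eqP -> bE ab.
    move: bE; rewrite inE ltnS => /andP [bQ bv].
    move: (hv b); rewrite bQ ab /= /o -leqNgt => vb.
    rewrite inE; apply/eqP; apply: (index_inj set0 (Qs b bQ) vs).
    by apply/eqP; rewrite eqn_leq bv vb.
  by move/subsetP => /(_ m mE); rewrite inE => /eqP ->.
Qed.

End E.


Theorem proposition6p4 (T : finType) (C : {set {set T}}) :
  ample C ->
  (has_corner_peeling C <->
   exists o : rel {set T}, orientation C o /\ acyclic C o /\ USO C o).
Proof.
move=> _; split => [[s hs]|[o [h1 [h2 h3]]]].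
  exact: forward hs.
exact: back h1 h2 h3.
Qed.
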